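(* Let $p$ be a prime and $f(x)=(x-x_1)\cdots(x-x_r)\in\mathbb{F}_p[x_1,\ldots,x_r][x]$. Let $r,e,d$ be integers with $r\ge2$, $\frac{p-1}{2}<e\le p-1$, $1\le d\le p$. Then for all $1\le i\le r$ and $1\le j\le r$, the element $\left\{\left(\frac{\partial}{\partial x}\right)^{p-d}f(x)^e\right\}[x_i^p,x_j]$ is divisible by $\prod_{1\le \ell\le r,\ \ell\ne i}(x_i-x_\ell)^{2e-(p-1)}$ in $\mathbb{F}_p[x_1,\ldots,x_r]$.
   Context: $x_1,\dots,x_r$ are independent indeterminates over $\mathbb{F}_p$. For a field $K$ of characteristic $p$ and $F(x)\in K(x)$, write uniquely $F(x)=\sum_{i=0}^{p-1}F_i(x^p)x^i$ with $F_i(x^p)\in K(x^p)$, and define $F[t,x]=\sum_{i=0}^{p-1}F_i(t)x^i$ for a new variable $t$; $F[x_i^p,x_j]$ denotes the substitution $t=x_i^p$, $x=x_j$. *)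

(* Defs.v *)
From HB Require Import structures.
From mathcomp Require Import all_boot all_order all_algebra.
From mathcomp Require Import mpoly.
Set Implicit Arguments. Unset Strict Implicit. Unset Printing Implicit Defensive.
Import GRing.Theory.
Local Open Scope ring_scope.

Definition Rx (p r : nat) := {mpoly 'F_p[r]}.

Definition fpoly (p r : nat) : {poly {mpoly 'F_p[r]}} :=
  \prod_(l < r) ('X - ('X_l)%:P).

(* For F(x) = sum_k F`_k x^k, writing k = p*(k %/ p) + (k %% p), we get
   F(x) = sum_{i<p} F_i(x^p) x^i with F_i(t) = sum_{k %% p = i} F`_k t^(k %/ p);
   hence F[t,x] = sum_k F`_k t^(k %/ p) x^(k %% p).  This is the substitution
   F[a,b] (t := a, x := b). *)
Definition subst_tx (p : nat) (R : comNzRingType) (F : {poly R}) (a b : R) : R :=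
  \sum_(k < size F) F`_k * a ^+ (k %/ p) * b ^+ (k %% p).

(* Main.v *)
Require Import Defs.
From HB Require Import structures.
From mathcomp Require Import all_boot all_order all_algebra.
From mathcomp Require Import mpoly zify.
Import GRing.Theory.
Local Open Scope ring_scope.

Section Dv.
Variable R : comNzRingType.
Definition dv (x y : R) := exists q, y = q * x.

Lemma dv0 x : dv x 0. Proof. by exists 0; rewrite mul0r. Qed.
Lemma dv1 y : dv 1 y. Proof. by exists y; rewrite mulr1. Qed.
Lemma dvD x y z : dv x y -> dv x z -> dv x (y + z).
Proof. by move=> [a ->] [b ->]; exists (a + b); rewrite mulrDl. Qed.
Lemma dvMl x y z : dv x y -> dv x (z * y).
Proof. by move=> [a ->]; exists (z * a); rewrite mulrA. Qed.
Lemma dvMr x y z : dv x y -> dv x (y * z).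
Proof. by move=> h; rewrite mulrC; apply: dvMl. Qed.
Lemma dvM x y u v : dv x y -> dv u v -> dv (x * u) (y * v).
Proof. by move=> [a ->] [b ->]; exists (a * b); rewrite mulrACA. Qed.
Lemma dv_trans x y z : dv x y -> dv y z -> dv x z.
Proof. by move=> [a ->] [b ->]; exists (b * a); rewrite mulrA. Qed.
Lemma dv_sum I (s : seq I) (P : pred I) (F : I -> R) x :
  (forall i, P i -> dv x (F i)) -> dv x (\sum_(i <- s | P i) F i).
Proof. by move=> h; apply: big_ind => //; [apply: dv0 | apply: dvD]. Qed.
Lemma dv_exp c m n : (m <= n)%N -> dv (c ^+ m) (c ^+ n).
Proof. by move=> h; exists (c ^+ (n - m)); rewrite -exprD subnK. Qed.
Lemma dv_prod I (s : seq I) (P : pred I) (F G : I -> R) :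
  (forall i, P i -> dv (F i) (G i)) ->
  dv (\prod_(i <- s | P i) F i) (\prod_(i <- s | P i) G i).
Proof.
move=> h; apply: (big_ind2 (fun x y => dv x y)) => //; first exact: dv1.
by move=> ? ? ? ?; apply: dvM.
Qed.

Lemma dv_coef_prod I (s : seq I) (P : pred I) (F : I -> {poly R}) (u : I -> R) n :
  (forall i, P i -> forall j, (j <= n)%N -> dv (u i) (F i)`_j) ->
  forall j, (j <= n)%N -> dv (\prod_(i <- s | P i) u i) (\prod_(i <- s | P i) F i)`_j.
Proof.
move=> h; apply: (big_ind2 (fun x (y : {poly R}) => forall j, (j <= n)%N -> dv x y`_j)).
- move=> j _; exact: dv1.
- move=> x1 y1 x2 y2 h1 h2 j hj; rewrite coefM; apply: dv_sum => k _.
  apply: dvM; first by apply: h1; apply: leq_trans hj; rewrite -ltnS.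
  by apply: h2; apply: leq_trans hj; apply: leq_subr.
- exact: h.
Qed.

Lemma dv_coef_lin (c : R) e : forall n j, (j <= n)%N ->
  dv (c ^+ (e - n)) (('X + c%:P) ^+ e)`_j.
Proof.
elim: e => [|e IH] n j hj.
  by rewrite sub0n expr0; apply: dv1.
rewrite exprSr mulrDr coefD coefMX coefMC; apply: dvD.
  case: eqP => [_|/eqP j0]; first exact: dv0.
  have -> : (e.+1 - n = e - n.-1)%N.
    by case: n hj => [|n] //=; rewrite leqn0 (negPf j0).
  by apply: IH; case: n hj => [|n]; case: j j0.
apply: (@dv_trans _ (c ^+ (e - n) * c)).
  by rewrite -exprSr; apply: dv_exp; lia.
by apply: dvM; [apply: IH | exists 1; rewrite mul1r].
Qed.
End Dv.
Arguments dv {R}.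

Section Lw.
Variable R : comNzRingType.
Variable w : nat -> R.
Definition Lw (F : {poly R}) := \sum_(k < size F) F`_k * w k.

Lemma Lw_widen (F : {poly R}) N : (size F <= N)%N -> Lw F = \sum_(k < N) F`_k * w k.
Proof.
move=> h; rewrite /Lw (big_ord_widen _ (fun k => F`_k * w k) h) big_mkcond /=.
apply: eq_bigr => k _; case: ltnP => // hk.
by rewrite nth_default // mul0r.
Qed.

Lemma Lw0 : Lw 0 = 0. Proof. by rewrite /Lw size_poly0 big_ord0. Qed.

Lemma LwD F G : Lw (F + G) = Lw F + Lw G.
Proof.
pose N := (size F + size G)%N.
rewrite (@Lw_widen (F + G) N); last first.
  by apply: leq_trans (size_polyD _ _) _; rewrite geq_max leq_addr leq_addl.
rewrite (@Lw_widen F N) ?leq_addr // (@Lw_widen G N) ?leq_addl //.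
by rewrite -big_split; apply: eq_bigr => k _; rewrite coefD mulrDl.
Qed.

Lemma LwZ c F : Lw (c *: F) = c * Lw F.
Proof.
rewrite (@Lw_widen _ (size F)) ?size_scale_leq // /Lw mulr_sumr.
by apply: eq_bigr => k _; rewrite coefZ mulrA.
Qed.

Lemma Lw_sum n (F : 'I_n -> {poly R}) : Lw (\sum_(k < n) F k) = \sum_(k < n) Lw (F k).
Proof. exact: (big_morph Lw LwD Lw0). Qed.

Lemma LwXp p T (hw : forall k, w (p + k) = T * w k) H :
  Lw ('X^p * H) = T * Lw H.
Proof.
pose M := (size ('X^p * H)%R + size H)%N.
rewrite (@Lw_widen _ (p + M)); last by rewrite /M; lia.
rewrite (@Lw_widen H M) ?leq_addl // big_split_ord /=.
rewrite big1 ?add0r; last by move=> k _; rewrite coefXnM /= ltn_ord mul0r.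
rewrite mulr_sumr; apply: eq_bigr => k _ /=.
rewrite coefXnM ltnNge leq_addr /= addKn hw.
by rewrite mulrCA.
Qed.
End Lw.
Arguments Lw {R}.
Arguments LwXp {R w p T}.

Lemma nodvd_fact p k : prime p -> (k < p)%N -> ~~ (p %| k`!)%N.
Proof.
move=> hp; elim: k => [|k IH] hk.
  by rewrite fact0 dvdn1; apply/eqP => h; rewrite h in hp.
rewrite factS Euclid_dvdM // negb_or IH ?andbT; last exact: ltnW.
apply/negP => /dvdn_leq h; have := h isT; rewrite leqNgt hk //.
Qed.

Lemma dvd_ffact p k m : prime p -> (k < p)%N -> (p <= m + k)%N -> (p %| (m + k) ^_ m)%N.
Proof.
move=> hp hk hmk.
have hf : (p %| (m + k)`!)%N by apply: dvdn_fact; rewrite prime_gt0.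
have := ffact_fact (leq_addr k m); rewrite addKn => e.
by move: hf; rewrite -e (Euclid_dvdM _ _ hp) // (negPf (nodvd_fact _ _ hp hk)) orbF.
Qed.

Lemma derivn_comp_shift (R : comNzRingType) (P : {poly R}) c m :
  (P \Po ('X + c%:P))^`(m) = P^`(m) \Po ('X + c%:P).
Proof.
elim: m => [|m IH]; first by rewrite !derivn0.
by rewrite !derivnS IH deriv_comp derivD derivX derivC addr0 mulr1.
Qed.

Theorem lemma1 (p r e d : nat) (hp : prime p) (hr : (2 <= r)%N)
  (he1 : (p - 1 < 2 * e)%N) (he2 : (e <= p - 1)%N)
  (hd1 : (1 <= d)%N) (hd2 : (d <= p)%N) (i j : 'I_r) :
  exists q : {mpoly 'F_p[r]},
    subst_tx p (((fpoly p r) ^+ e)^`(p - d)) ('X_i ^+ p) 'X_j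
    = q * \prod_(l < r | l != i) ('X_i - 'X_l) ^+ (2 * e - (p - 1)).
Proof.
set a : {mpoly 'F_p[r]} := 'X_i; set b : {mpoly 'F_p[r]} := 'X_j; set T := a ^+ p.
pose D := \prod_(l < r | l != i) (a - 'X_l : {mpoly 'F_p[r]}) ^+ (2 * e - (p - 1))%N.
rewrite -/D.
set m := (p - d)%N.
have p0 : (0 < p)%N by apply: prime_gt0.
have hR : (p%:R : {mpoly 'F_p[r]}) = 0 by rewrite -mpolyC_nat pchar_Fp_0 // mpolyC0.
have hc : p \in [char {poly {mpoly 'F_p[r]}}].
  by rewrite pchar_poly inE hp /= hR.
pose w k : {mpoly 'F_p[r]} := T ^+ (k %/ p) * b ^+ (k %% p).
have hw : forall k, w (p + k)%N = T * w k.
  move=> k; rewrite /w divnDl ?dvdnn // divnn p0 add1n exprS -mulrA.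
  by rewrite (modnDl k p).
have Lzero : forall k, (p <= k)%N -> Lw w (('X - a%:P) ^+ k) = 0.
  move=> k hk; rewrite -(subnKC hk) exprD.
  have -> : ('X - a%:P) ^+ p = 'X^p - T%:P.
    rewrite -(pFrobenius_autE hc) pFrobenius_autB_comm; last by rewrite /GRing.comm mulrC.
    by rewrite !pFrobenius_autE rmorphXn.
  rewrite mulrBl mul_polyC -scaleNr LwD (LwXp hw) LwZ.
  by rewrite mulNr addrN.
have -> : subst_tx p (((fpoly p r) ^+ e)^`(m)) T b = Lw w (((fpoly p r) ^+ e)^`(m)).
  by rewrite /subst_tx /Lw; apply: eq_bigr => k _; rewrite /w mulrA.
set G := (_ ^`(m)).
set Fs := (fpoly p r ^+ e) \Po ('X + a%:P).
set Gs := G \Po ('X + a%:P).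
have hG : G = Gs \Po ('X - a%:P).
  rewrite /Gs -comp_polyA comp_polyD comp_polyX comp_polyC subrK.
  by rewrite comp_polyXr.
have hGs : Gs = Fs^`(m) by rewrite /Gs /Fs derivn_comp_shift.
suff hdv : forall k, (k < p)%N -> dv D Gs`_k.
  rewrite hG comp_polyE Lw_sum.
  suff : dv D (\sum_(k < size Gs) Lw w (Gs`_k *: ('X - a%:P) ^+ k)) by [].
  apply: dv_sum => k _; rewrite LwZ.
  case: (ltnP k p) => hk; first by apply: dvMr; apply: hdv.
  by rewrite Lzero // mulr0; apply: dv0.
move=> k hk; rewrite hGs coef_derivn.
case: (ltnP (m + k) p) => hmk; last first.
  have [c ->] := dvdnP (dvd_ffact _ _ _ hp hk hmk).
  rewrite mulrnA -mulr_natr hR mulr0. exact: dv0.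
set n := (m + k)%N.
have hFs : Fs = 'X^e * \prod_(l < r | l != i) ('X + (a - 'X_l)%:P) ^+ e.
  rewrite /Fs /fpoly -prodrXl (rmorph_prod (comp_poly ('X + a%:P))) /=.
  rewrite (bigD1 i) //=; congr (_ * _).
    by rewrite rmorphXn /= comp_polyB comp_polyX comp_polyC addrK.
  apply: eq_bigr => l _; rewrite rmorphXn /= comp_polyB comp_polyX comp_polyC.
  by rewrite polyCB addrA.
rewrite hFs coefXnM; case: (ltnP n e) => hne; first by rewrite mul0rn; exact: dv0.
rewrite -mulr_natr; apply: dvMr.
apply: (@dv_trans _ _ (\prod_(l < r | l != i) (a - 'X_l) ^+ (e - (n - e)))).
  apply: dv_prod => l _; apply: dv_exp; rewrite /n /m; lia.
apply: (@dv_coef_prod _ _ _ _ _ _ (n - e)%N) => // l _ jj hjj.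
exact: dv_coef_lin.
Qed.
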